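(* Let $\kappa,\ell\ge2$ and $n,m\ge0$. Let $w=(a^{\kappa+1}b^\ell)^na^\kappa$ and $w'=(b^{\ell+1}a^\kappa)^mb^\ell$; for $n=0$ and $m=0$ these are the rank-1 words $a^\kappa$ and $b^\ell$, whose curves are the lines $\mathrm a=\zeta_\kappa$ and $\mathrm b=\zeta_\ell$. Then at the point of $\mathcal D_{\kappa,\ell}$ where the legal arcs of $\mathcal C_w$ and $\mathcal C_{w'}$ intersect, the rotation number is $$\theta(\mathcal C_w\cap\mathcal C_{w'})=\vartheta^-_{\kappa+\ell+1,\,n+m+1}=\frac{n+m+1}{(n+m+1)(\kappa+\ell+1)-1}.$$
   Context: For real parameters $\mathrm a,\mathrm b$, the map $F:\mathbb R^2\to\mathbb R^2$ is $F(x,y)=(\mathrm a x-y,x)$ if $x>0$ or ($x=0$ and $y\le0$), and $F(x,y)=(\mathrm b x-y,x)$ otherwise. Letter $a$ is assigned to points in the open right half-plane or on the negative $y$-axis, and $b$ otherwise. Boundary rays are the $y$ semi-axes. For a word $w=w_0\cdots w_{n-1}$ of odd rank ($\text{rank}=1+|w|_{ab}+|w|_{ba}$): with $Q_{-1}=-1$, $Q_0=0$, $Q_{t+1}=w_tQ_t-Q_{t-1}$ (letters specialised to $\mathrm a,\mathrm b$) and $\mathbf k=\lfloor n/2\rfloor$, the critical curve is $\mathcal C_w=\{C_w=0\}$, where $C_w=Q_{\mathbf k+1}-Q_{\mathbf k}$ ($n$ odd) or $Q_{\mathbf k+1}-Q_{\mathbf k-1}$ ($n$ even). Its legal arc is the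 set of parameter pairs at which $w$ is equivalent (differing only at positions where the orbit lies on a boundary ray) to the symbolic word of the actual $F$-orbit segment between boundary rays. $\theta$ is the rotation number: $\lim_n\frac1n$ times the number of occurrences of $ab$ in the length-$n$ prefix of the symbolic word of any orbit. $\zeta_j=2\cos(\pi/j)$, $\vartheta^-_{j,m}=\frac m{mj-1}$, and $\mathcal D_{\kappa,\ell}=[\zeta_\kappa,\zeta_{\kappa+1}]\times[\zeta_\ell,\zeta_{\ell+1}]$. *)

(* Defs.v *)
From Stdlib Require Import Reals Lra List Arith Bool.
Open Scope R_scope.

Inductive letter := La | Lb.

Definition letter_eqb (u v : letter) : bool :=
  match u, v with La, La | Lb, Lb => true | _, _ => false end.

Definition spec (pa pb : R) (u : letter) : R :=
  match u with La => pa | Lb => pb end.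

Definition letter_of (p : R * R) : letter :=
  let (x, y) := p in
  if Rlt_dec 0 x then La
  else if Req_EM_T x 0 then (if Rle_dec y 0 then La else Lb) else Lb.

Definition Fmap (pa pb : R) (p : R * R) : R * R :=
  let (x, y) := p in (spec pa pb (letter_of p) * x - y, x).

Definition orbit (pa pb : R) (t : nat) (p : R * R) : R * R :=
  Nat.iter t (Fmap pa pb) p.

Definition on_boundary (p : R * R) : Prop := fst p = 0.

Definition word := list letter.
Definition wpow (u : word) (k : nat) : word := concat (repeat u k).

(* (Q_{t-1}, Q_t), with Q_{-1} = -1, Q_0 = 0, Q_{t+1} = w_t Q_t - Q_{t-1} *)
Fixpoint Qpair (pa pb : R) (w : word) (t : nat) : R * R :=
  match t with
  | O => (-1, 0)
  | S t' => let (u, v) := Qpair pa pb w t' in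
            (v, spec pa pb (nth t' w La) * v - u)
  end.

Definition Q (pa pb : R) (w : word) (t : nat) : R := snd (Qpair pa pb w t).

Definition Cw (w : word) (pa pb : R) : R :=
  let n := length w in
  let k := Nat.div2 n in
  if Nat.odd n then Q pa pb w (S k) - Q pa pb w k
  else Q pa pb w (S k) - fst (Qpair pa pb w k).

(* starting point of the orbit segment: on the negative y-axis (moving into
   the right half-plane) if w starts with a, on the positive y-axis if w
   starts with b. *)
Definition start_pt (w : word) : R * R :=
  match w with Lb :: _ => (0, 1) | _ => (0, -1) end.

(* legal arc of C_w: points of C_w at which the actual symbolic word of the
   orbit segment agrees with w except at positions on a boundary ray *)
Definition legal_arc (w : word) (pa pb : R) : Prop :=
  Cw w pa pb = 0 /\
  forall t, (t < length w)%nat ->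
    on_boundary (orbit pa pb t (start_pt w)) \/
    letter_of (orbit pa pb t (start_pt w)) = nth t w La.

Definition count_ab (pa pb : R) (p : R * R) (N : nat) : nat :=
  length (filter (fun t => andb (letter_eqb (letter_of (orbit pa pb t p)) La)
                          (letter_eqb (letter_of (orbit pa pb (S t) p)) Lb))
                 (seq 0 (N - 1))).

Definition rotation_number_is (pa pb r : R) : Prop :=
  forall p : R * R, p <> (0, 0) ->
    Un_cv (fun N => INR (count_ab pa pb p N) / INR N) r.

Definition zeta (j : nat) : R := 2 * cos (PI / INR j).

Definition vartheta_minus (j m : nat) : R := INR m / (INR m * INR j - 1).

Definition Dbox (kappa l : nat) (pa pb : R) : Prop :=
  zeta kappa <= pa <= zeta (S kappa) /\ zeta l <= pb <= zeta (S l).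

Definition w_left (kappa l n : nat) : word :=
  wpow (repeat La (S kappa) ++ repeat Lb l) n ++ repeat La kappa.
Definition w_right (kappa l m : nat) : word :=
  wpow (repeat Lb (S l) ++ repeat La kappa) m ++ repeat Lb l.

(* Main.v *)
Require Import Defs.
From Stdlib Require Import Reals Lra Lia List Arith Bool.
Open Scope R_scope.

Definition stp (pa pb : R) (c : letter) (p : R*R) : R*R :=
  (spec pa pb c * fst p - snd p, fst p).
Definition run (pa pb : R) (l : word) (p : R*R) : R*R :=
  fold_left (fun q c => stp pa pb c q) l p.
Definition swp (p : R*R) : R*R := (snd p, fst p).
Definition opp2 (p : R*R) : R*R := (- fst p, - snd p).

Lemma run_app pa pb l1 l2 p : run pa pb (l1 ++ l2) p = run pa pb l2 (run pa pb l1 p).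
Proof. unfold run; apply fold_left_app. Qed.

Lemma run_cons pa pb c l p : run pa pb (c :: l) p = run pa pb l (stp pa pb c p).
Proof. reflexivity. Qed.

Lemma stp_swp pa pb c q : stp pa pb c (swp (stp pa pb c q)) = swp q.
Proof. destruct q as [x y]; unfold stp, swp; simpl; f_equal; ring. Qed.

Lemma run_rev_swap pa pb v p : run pa pb (rev v) (swp (run pa pb v p)) = swp p.
Proof.
  induction v as [|c v IH] using rev_ind; [reflexivity|].
  rewrite rev_app_distr. change (rev (c :: nil) ++ rev v) with (c :: rev v). rewrite run_cons, run_app.
  change (run pa pb (c :: nil) (run pa pb v p)) with (stp pa pb c (run pa pb v p)).
  rewrite stp_swp; exact IH.
Qed.

Lemma run_opp pa pb l p : run pa pb l (opp2 p) = opp2 (run pa pb l p).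
Proof.
  revert p; induction l as [|c l IH]; intro p; [reflexivity|].
  rewrite !run_cons. rewrite <- IH. f_equal.
  destruct p; unfold stp, opp2; simpl; f_equal; ring.
Qed.

Lemma firstn_S_nth (w : word) t : (t < length w)%nat ->
  firstn (S t) w = firstn t w ++ nth t w La :: nil.
Proof.
  revert t; induction w as [|c w IH]; intros t Ht; simpl in Ht; [lia|].
  destruct t; [reflexivity|].
  replace (firstn (S (S t)) (c :: w)) with (c :: firstn (S t) w) by reflexivity.
  rewrite IH by lia. reflexivity.
Qed.

Lemma app_eq_len {A} (l1 l2 l3 l4 : list A) : l1 ++ l2 = l3 ++ l4 ->
  length l1 = length l3 -> l1 = l3 /\ l2 = l4.
Proof.
  revert l3; induction l1 as [|x l1 IH]; intros [|y l3] H Hl; simpl in *; try lia.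
  - auto.
  - injection H as -> H. destruct (IH l3 H) as [-> ->]; auto.
Qed.


Lemma pal_decomp (u : word) k e : rev u = u -> length u = (2 * k + e)%nat ->
  u = firstn k u ++ firstn e (skipn k u) ++ rev (firstn k u).
Proof.
  intros Hr Hl.
  set (v := firstn k u). set (s := skipn k u).
  assert (Hu : u = v ++ s) by (symmetry; apply firstn_skipn).
  assert (Hv : length v = k) by (unfold v; rewrite length_firstn; lia).
  assert (Hs : length s = (k + e)%nat) by (unfold s; rewrite length_skipn; lia).
  assert (E : rev s ++ rev v = v ++ firstn e s ++ skipn e s).
  { rewrite firstn_skipn, <- Hu, <- rev_app_distr, <- Hu; exact Hr. }
  rewrite app_assoc in E.
  apply app_eq_len in E as [_ E2].
  2:{ rewrite length_rev, length_app, length_firstn. lia. }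
  rewrite Hu at 1. f_equal.
  rewrite <- (firstn_skipn e s) at 1. rewrite <- E2. reflexivity.
Qed.

Definition p0 : R*R := (0, -1).

Lemma Qpair_run pa pb w t : (t <= length w)%nat ->
  Qpair pa pb w t = swp (run pa pb (firstn t w) p0).
Proof.
  induction t as [|t IH]; intro Ht; [reflexivity|].
  simpl Qpair. rewrite IH by lia. rewrite firstn_S_nth by lia. rewrite run_app.
  reflexivity.
Qed.

Lemma Qpair_S_fst pa pb w t : fst (Qpair pa pb w (S t)) = snd (Qpair pa pb w t).
Proof. simpl. destruct (Qpair pa pb w t). reflexivity. Qed.

Lemma div2_even k : Nat.div2 (S (2 * k)) = k /\ Nat.odd (S (2 * k)) = true.
Proof.
  split.
  - rewrite <- Nat.add_1_r. pose proof (Nat.div2_odd (2*k+1)) as H.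
    rewrite Nat.odd_odd in H. simpl Nat.b2n in H. lia.
  - rewrite <- Nat.add_1_r. apply Nat.odd_odd.
Qed.

Lemma div2_odd' k : Nat.div2 (S (2 * k + 1)) = S k /\ Nat.odd (S (2 * k + 1)) = false.
Proof.
  replace (S (2 * k + 1)) with (2 * S k)%nat by lia.
  split.
  - pose proof (Nat.div2_odd (2*S k)) as H. rewrite Nat.odd_even in H. simpl Nat.b2n in H. lia.
  - apply Nat.odd_even.
Qed.

Lemma pal_middle pa pb c0 u : rev u = u -> Cw (c0 :: u) pa pb = 0 ->
  run pa pb (c0 :: u) p0 = (0, 1).
Proof.
  intros Hr HC. rewrite run_cons.
  assert (Hp1 : stp pa pb c0 p0 = (1, 0)) by (unfold stp, p0; simpl; f_equal; ring).
  rewrite Hp1.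
  unfold Cw in HC. cbv zeta in HC. simpl length in HC.
  destruct (Nat.Even_or_Odd (length u)) as [[k Hk]|[k Hk]].
  - destruct (div2_even k) as [D O]. rewrite Hk, D, O in HC.
    unfold Q in HC. rewrite <- (Qpair_S_fst pa pb (c0 :: u) k) in HC.
    rewrite Qpair_run in HC by (simpl; lia).
    replace (firstn (S k) (c0 :: u)) with (c0 :: firstn k u) in HC by reflexivity.
    rewrite run_cons, Hp1 in HC. unfold swp in HC; simpl in HC.
    set (q := run pa pb (firstn k u) (1, 0)) in HC.
    assert (Hq : swp q = q) by (unfold swp; destruct q; simpl in *; f_equal; lra).
    rewrite (pal_decomp u k 0 Hr) by lia. simpl firstn at 2. rewrite app_nil_l.
    rewrite run_app. fold q. rewrite <- Hq. unfold q. rewrite run_rev_swap. reflexivity.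
  - destruct (div2_odd' k) as [D O]. rewrite Hk, D, O in HC.
    unfold Q in HC. rewrite !Qpair_run in HC by (simpl; lia).
    replace (firstn (S (S k)) (c0 :: u)) with (c0 :: firstn (S k) u) in HC by reflexivity.
    replace (firstn (S k) (c0 :: u)) with (c0 :: firstn k u) in HC by reflexivity.
    rewrite !run_cons, Hp1 in HC.
    rewrite firstn_S_nth in HC by lia. rewrite run_app in HC.
    set (q := run pa pb (firstn k u) (1, 0)) in HC.
    set (c := nth k u La) in HC.
    change (run pa pb (c :: nil) q) with (stp pa pb c q) in HC.
    assert (Hq : stp pa pb c q = swp q).
    { unfold swp, stp in *; destruct q; simpl in *; f_equal; lra. }
    rewrite (pal_decomp u k 1 Hr) by lia.
    assert (Hd : firstn 1 (skipn k u) = c :: nil).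
    { unfold c. assert (Hk' : (k < length u)%nat) by lia. clear -Hk'. revert k Hk'.
      induction u as [|x u IH]; intros k Hk; simpl in Hk; [lia|].
      destruct k; simpl. reflexivity. apply IH. lia. }
    rewrite Hd. rewrite !run_app. fold q.
    change (run pa pb (c :: nil) q) with (stp pa pb c q). rewrite Hq. unfold q. rewrite run_rev_swap. reflexivity.
Qed.

Lemma wpow_S (u : word) n : wpow u (S n) = u ++ wpow u n.
Proof. reflexivity. Qed.

Lemma wpow_shift (Y Z : word) n : Y ++ wpow (Z ++ Y) n = wpow (Y ++ Z) n ++ Y.
Proof.
  induction n as [|n IH]; [simpl; rewrite app_nil_r; reflexivity|].
  rewrite !wpow_S. rewrite <- !app_assoc. f_equal. rewrite IH. reflexivity.
Qed.

Lemma rev_wpow (X : word) n : rev (wpow X n) = wpow (rev X) n.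
Proof.
  induction n as [|n IH]; [reflexivity|].
  rewrite wpow_S, rev_app_distr, IH, wpow_S.
  pose proof (wpow_shift (rev X) nil n) as H. simpl in H. rewrite app_nil_r in H.
  symmetry; exact H.
Qed.

Lemma length_wpow (X : word) n : length (wpow X n) = (n * length X)%nat.
Proof. induction n as [|n IH]; [reflexivity|]. rewrite wpow_S, length_app, IH. simpl. lia. Qed.

Lemma shape c d k j n :
  wpow (repeat c (S (S k)) ++ repeat d j) n ++ repeat c (S k) =
  c :: (wpow (repeat c (S k) ++ repeat d j ++ c :: nil) n ++ repeat c k).
Proof.
  set (W := repeat c (S k) ++ repeat d j).
  change (repeat c (S (S k)) ++ repeat d j) with (c :: W).
  pose proof (wpow_shift (c :: nil) W n) as H.
  change ((c :: nil) ++ W) with (c :: W) in H.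
  change ((c :: nil) ++ wpow (W ++ c :: nil) n) with (c :: wpow (W ++ c :: nil) n) in H.
  replace (repeat c (S k)) with ((c :: nil) ++ repeat c k) at 1 by reflexivity.
  rewrite app_assoc, <- H. unfold W. rewrite <- app_assoc. reflexivity.
Qed.

Lemma shape_pal c d k j n :
  let U := wpow (repeat c (S k) ++ repeat d j ++ c :: nil) n ++ repeat c k in rev U = U.
Proof.
  intro U. unfold U. rewrite rev_app_distr, rev_wpow, rev_repeat.
  rewrite !rev_app_distr, !rev_repeat. simpl rev.
  pose proof (wpow_shift (repeat c k) (c :: repeat d j ++ c :: nil) n) as H.
  replace (((c :: nil) ++ repeat d j) ++ repeat c (S k))
    with ((c :: repeat d j ++ c :: nil) ++ repeat c k).
  2:{ simpl. rewrite <- app_assoc. reflexivity. }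
  rewrite H. f_equal. f_equal.
  change (repeat c (S k)) with (c :: repeat c k). rewrite repeat_cons.
  rewrite <- app_assoc. reflexivity.
Qed.

Fixpoint abc (p : letter) (l : word) : nat :=
  match l with
  | nil => 0
  | x :: l' => ((if letter_eqb p La && letter_eqb x Lb then 1 else 0) + abc x l')%nat
  end.
Fixpoint lst (p : letter) (l : word) : letter :=
  match l with nil => p | x :: l' => lst x l' end.

Lemma abc_app p l1 l2 : abc p (l1 ++ l2) = (abc p l1 + abc (lst p l1) l2)%nat.
Proof. revert p; induction l1 as [|x l1 IH]; intro p; simpl; [reflexivity|]. rewrite IH. lia. Qed.
Lemma lst_app p l1 l2 : lst p (l1 ++ l2) = lst (lst p l1) l2.
Proof. revert p; induction l1 as [|x l1 IH]; intro p; simpl; auto. Qed.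
Lemma abc_rep_a p k : abc p (repeat La k) = 0%nat.
Proof. revert p; induction k as [|k IH]; intro p; simpl; auto. rewrite IH. destruct p; reflexivity. Qed.
Lemma abc_rep_bb k : abc Lb (repeat Lb k) = 0%nat.
Proof. induction k as [|k IH]; simpl; auto. Qed.
Lemma abc_rep_b p k : abc p (repeat Lb (S k)) = if letter_eqb p La then 1%nat else 0%nat.
Proof. simpl. rewrite abc_rep_bb. destruct p; reflexivity. Qed.
Lemma lst_rep p c k : lst p (repeat c (S k)) = c.
Proof. revert p; induction k as [|k IH]; intro p; simpl; auto. apply (IH c). Qed.

Lemma abc_wl p k j n : abc p (w_left (S k) (S j) n) = n.
Proof.
  unfold w_left. rewrite abc_app, abc_rep_a. rewrite Nat.add_0_r.
  revert p; induction n as [|n IH]; intro p; [reflexivity|].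
  rewrite wpow_S, abc_app, IH, abc_app, abc_rep_a, lst_rep, abc_rep_b. reflexivity.
Qed.
Lemma lst_wl p k j n : lst p (w_left (S k) j n) = La.
Proof. unfold w_left. rewrite lst_app. apply lst_rep. Qed.

Lemma abc_wr k j m : abc La (w_right (S k) (S j) m) = S m.
Proof.
  unfold w_right. rewrite abc_app.
  set (Y := repeat Lb (S (S j)) ++ repeat La (S k)).
  assert (HY1 : lst La Y = La) by (unfold Y; rewrite lst_app; apply lst_rep).
  assert (HY2 : abc La Y = 1%nat) by (unfold Y; rewrite abc_app, abc_rep_a, abc_rep_b; reflexivity).
  assert (H : forall m, abc La (wpow Y m) = m /\ lst La (wpow Y m) = La).
  { induction m0 as [|m0 IH]; [split; reflexivity|].
    rewrite wpow_S, abc_app, lst_app, HY1, HY2.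
    destruct IH as [-> ->]. split; reflexivity. }
  destruct (H m) as [-> ->]. rewrite abc_rep_b. simpl. lia.
Qed.

Lemma abc_total k j n m :
  abc Lb (w_left (S k) (S j) n ++ w_right (S k) (S j) m) = (n + m + 1)%nat.
Proof.
  rewrite abc_app, abc_wl, lst_wl, abc_wr. lia.
Qed.

Fixpoint cnt (g : nat -> bool) (N : nat) : nat :=
  match N with O => O | S N' => (cnt g N' + if g N' then 1 else 0)%nat end.

Lemma cnt_shift g N : cnt g (S N) = ((if g O then 1 else 0) + cnt (fun t => g (S t)) N)%nat.
Proof. induction N as [|N IH]; simpl in *; [lia|]. rewrite IH. lia. Qed.

Definition mu (W : word) (t : nat) : bool :=
  letter_eqb (nth t W La) La && letter_eqb (nth (S t) W La) Lb.

Lemma abc_cnt p W : abc p W =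
  ((if letter_eqb p La && letter_eqb (nth 0 W La) Lb then 1 else 0) + cnt (mu W) (length W))%nat.
Proof.
  revert p; induction W as [|x W IH]; intro p.
  - simpl. destruct p; reflexivity.
  - simpl length. rewrite cnt_shift. simpl abc. rewrite IH. simpl nth.
    change (fun t => mu (x :: W) (S t)) with (mu W).
    reflexivity.
Qed.

Definition ang (p : R*R) : R :=
  let (x,y) := p in
  if Rlt_dec 0 x then 3/2 + atan (y/x) / PI
  else if Rlt_dec x 0 then 1/2 + atan (y/x) / PI
  else if Rlt_dec 0 y then 0 else 1.

Definition hh (pa pb s : R) : R :=
  if Rle_dec s 0 then 0
  else if Rlt_dec s 1 then 1/2 + atan (tan (PI*(s-1/2)) - pb) / PI
  else if Rle_dec s 1 then 1
  else 3/2 + atan (tan (PI*(s-3/2)) - pa) / PI.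

Lemma atan_div z : -1/2 < atan z / PI < 1/2.
Proof.
  pose proof (atan_bound z). pose proof PI_RGT_0.
  assert (E : atan z / PI * PI = atan z) by (field; lra).
  split; nra.
Qed.

Lemma ang_range p : 0 <= ang p < 2.
Proof.
  destruct p as [x y]; unfold ang.
  destruct (Rlt_dec 0 x); [pose proof (atan_div (y/x)); lra|].
  destruct (Rlt_dec x 0); [pose proof (atan_div (y/x)); lra|].
  destruct (Rlt_dec 0 y); lra.
Qed.

Lemma letter_of_pos x y : 0 < x -> letter_of (x,y) = La.
Proof. intro H; unfold letter_of; destruct (Rlt_dec 0 x); [reflexivity|lra]. Qed.
Lemma letter_of_neg x y : x < 0 -> letter_of (x,y) = Lb.
Proof. intro H; unfold letter_of; destruct (Rlt_dec 0 x); [lra|].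
  destruct (Req_EM_T x 0); [lra|reflexivity]. Qed.
Lemma letter_of_0a y : y <= 0 -> letter_of (0,y) = La.
Proof. intro H; unfold letter_of; destruct (Rlt_dec 0 0); [lra|].
  destruct (Req_EM_T 0 0); [|lra]. destruct (Rle_dec y 0); [reflexivity|lra]. Qed.
Lemma letter_of_0b y : 0 < y -> letter_of (0,y) = Lb.
Proof. intro H; unfold letter_of; destruct (Rlt_dec 0 0); [lra|].
  destruct (Req_EM_T 0 0); [|lra]. destruct (Rle_dec y 0); [lra|reflexivity]. Qed.

Lemma letter_ang p : (letter_of p = La -> 1 <= ang p) /\ (letter_of p = Lb -> ang p < 1).
Proof.
  destruct p as [x y].
  destruct (Rtotal_order x 0) as [Hx|[Hx|Hx]].
  - rewrite letter_of_neg by lra. unfold ang.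
    destruct (Rlt_dec 0 x); [lra|]. destruct (Rlt_dec x 0); [|lra].
    pose proof (atan_div (y/x)). split; intro HH; [discriminate|lra].
  - subst x. destruct (Rle_dec y 0).
    + rewrite letter_of_0a by lra. unfold ang.
      destruct (Rlt_dec 0 0); [lra|]. destruct (Rlt_dec 0 0); [lra|].
      destruct (Rlt_dec 0 y); [lra|]. split; intro HH; [lra|discriminate].
    + rewrite letter_of_0b by lra. unfold ang.
      destruct (Rlt_dec 0 0); [lra|]. destruct (Rlt_dec 0 0); [lra|].
      destruct (Rlt_dec 0 y); [|lra]. split; intro HH; [discriminate|lra].
  - rewrite letter_of_pos by lra. unfold ang.
    destruct (Rlt_dec 0 x); [|lra].
    pose proof (atan_div (y/x)). split; intro HH; [lra|discriminate].
Qed.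

Lemma hh_range pa pb s :
  (0 <= s < 1 -> 0 <= hh pa pb s < 1) /\ (1 <= s < 2 -> 1 <= hh pa pb s < 2).
Proof.
  unfold hh.
  pose proof (atan_div (tan (PI*(s-1/2)) - pb)).
  pose proof (atan_div (tan (PI*(s-3/2)) - pa)).
  destruct (Rle_dec s 0); [split; intro; lra|].
  destruct (Rlt_dec s 1); [split; intro; lra|].
  destruct (Rle_dec s 1); split; intro; lra.
Qed.

Lemma tan_le u v : -PI/2 < u -> u <= v -> v < PI/2 -> tan u <= tan v.
Proof.
  intros H1 H2 H3. destruct (Req_dec u v) as [->|Hn]; [lra|].
  left; apply tan_increasing; lra.
Qed.
Lemma atan_le u v : u <= v -> atan u <= atan v.
Proof. intro H. destruct (Req_dec u v) as [->|Hn]; [lra|]. left; apply atan_increasing; lra. Qed.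

Lemma div_PI_le u v : u <= v -> u / PI <= v / PI.
Proof. intro H. pose proof PI_RGT_0. unfold Rdiv. apply Rmult_le_compat_r; [|lra].
  left; apply Rinv_0_lt_compat; lra. Qed.

Lemma hh_mono pa pb s1 s2 : 0 <= s1 -> s1 <= s2 -> s2 < 2 -> hh pa pb s1 <= hh pa pb s2.
Proof.
  intros H1 H2 H3. pose proof PI_RGT_0 as HPI.
  destruct (Rlt_dec s1 1) as [L1|L1]; destruct (Rlt_dec s2 1) as [L2|L2].
  - unfold hh.
    destruct (Rle_dec s1 0).
    + destruct (Rle_dec s2 0); [lra|]. destruct (Rlt_dec s2 1); [|lra].
      pose proof (atan_div (tan (PI*(s2-1/2)) - pb)). lra.
    + destruct (Rle_dec s2 0); [lra|]. destruct (Rlt_dec s1 1); [|lra].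
      destruct (Rlt_dec s2 1); [|lra].
      apply Rplus_le_compat_l. apply div_PI_le. apply atan_le.
      apply Rplus_le_compat_r. apply tan_le; nra.
  - destruct (hh_range pa pb s1) as [A _]. destruct (hh_range pa pb s2) as [_ B].
    specialize (A ltac:(lra)). specialize (B ltac:(lra)). lra.
  - lra.
  - unfold hh.
    destruct (Rle_dec s1 0); [lra|]. destruct (Rle_dec s2 0); [lra|].
    destruct (Rlt_dec s1 1); [lra|]. destruct (Rlt_dec s2 1); [lra|].
    destruct (Rle_dec s1 1).
    + destruct (Rle_dec s2 1); [lra|].
      pose proof (atan_div (tan (PI*(s2-3/2)) - pa)). lra.
    + destruct (Rle_dec s2 1); [lra|].
      apply Rplus_le_compat_l. apply div_PI_le. apply atan_le.
      apply Rplus_le_compat_r. apply tan_le; nra.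
Qed.

Lemma Fmap_eq pa pb x y : Fmap pa pb (x,y) = (spec pa pb (letter_of (x,y)) * x - y, x).
Proof. reflexivity. Qed.

Lemma ang_pos x y : 0 < x -> ang (x,y) = 3/2 + atan (y/x) / PI.
Proof. intro H; unfold ang; destruct (Rlt_dec 0 x); [reflexivity|lra]. Qed.
Lemma ang_neg x y : x < 0 -> ang (x,y) = 1/2 + atan (y/x) / PI.
Proof. intro H; unfold ang; destruct (Rlt_dec 0 x); [lra|].
  destruct (Rlt_dec x 0); [reflexivity|lra]. Qed.
Lemma ang_0a y : y <= 0 -> ang (0,y) = 1.
Proof. intro H; unfold ang; destruct (Rlt_dec 0 0); [lra|].
  destruct (Rlt_dec 0 0); [lra|]. destruct (Rlt_dec 0 y); [lra|reflexivity]. Qed.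
Lemma ang_0b y : 0 < y -> ang (0,y) = 0.
Proof. intro H; unfold ang; destruct (Rlt_dec 0 0); [lra|].
  destruct (Rlt_dec 0 0); [lra|]. destruct (Rlt_dec 0 y); [reflexivity|lra]. Qed.

Lemma ang_H pa pb x y : (x,y) <> (0,0) ->
  ang (x, y - spec pa pb (letter_of (x,y)) * x) = hh pa pb (ang (x,y)).
Proof.
  intro Hnz. pose proof PI_RGT_0 as HPI.
  destruct (Rtotal_order x 0) as [Hx|[Hx|Hx]].
  - rewrite letter_of_neg by lra. simpl spec. rewrite !ang_neg by lra.
    pose proof (atan_div (y/x)).
    unfold hh. destruct (Rle_dec _ 0); [lra|]. destruct (Rlt_dec _ 1); [|lra].
    replace (PI * (1 / 2 + atan (y / x) / PI - 1 / 2)) with (atan (y/x)) by (field; lra).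
    rewrite tan_atan. f_equal. f_equal. f_equal. field. lra.
  - subst x. replace (y - spec pa pb (letter_of (0, y)) * 0) with y by ring.
    destruct (Rle_dec y 0).
    + rewrite ang_0a by lra. unfold hh. destruct (Rle_dec 1 0); [lra|].
      destruct (Rlt_dec 1 1); [lra|]. destruct (Rle_dec 1 1); [reflexivity|lra].
    + rewrite ang_0b by lra. unfold hh. destruct (Rle_dec 0 0); [reflexivity|lra].
  - rewrite letter_of_pos by lra. simpl spec. rewrite !ang_pos by lra.
    pose proof (atan_div (y/x)).
    unfold hh. destruct (Rle_dec _ 0); [lra|]. destruct (Rlt_dec _ 1); [lra|].
    destruct (Rle_dec _ 1); [lra|].
    replace (PI * (3 / 2 + atan (y / x) / PI - 3 / 2)) with (atan (y/x)) by (field; lra).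
    rewrite tan_atan. f_equal. f_equal. f_equal. field. lra.
Qed.

Lemma ang_R x y : (x,y) <> (0,0) ->
  ang (-y, x) + 2 * (if Rlt_dec 0 x then if Rle_dec 0 y then 1 else 0 else 0) = ang (x,y) + 1/2.
Proof.
  intro Hnz. pose proof PI_RGT_0 as HPI.
  destruct (Rtotal_order x 0) as [Hx|[Hx|Hx]];
  (destruct (Rlt_dec 0 x); [|]); try lra;
  destruct (Rtotal_order y 0) as [Hy|[Hy|Hy]]; try (destruct (Rle_dec 0 y); try lra).
  -
    rewrite ang_pos by lra. rewrite ang_neg by lra.
    assert (Hp : 0 < y/x) by (replace (y/x) with ((-y)/(-x)) by (field; lra); apply Rdiv_lt_0_compat; lra).
    replace (x / - y) with (- / (y/x)) by (field; lra).
    rewrite atan_opp, atan_inv by exact Hp. field. lra.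
  - subst y. rewrite Ropp_0, ang_0a by lra. rewrite ang_neg by lra.
    replace (0 / x) with 0 by (field; lra). rewrite atan_0. field. lra.
  - rewrite ang_neg by lra. rewrite ang_neg by lra.
    assert (Hp : 0 < - (y/x)) by (replace (-(y/x)) with (y/(-x)) by (field; lra); apply Rdiv_lt_0_compat; lra).
    replace (x / - y) with (/ (- (y/x))) by (field; lra).
    rewrite atan_inv by exact Hp. rewrite atan_opp. field. lra.
  - subst x. rewrite ang_0a by lra. rewrite ang_pos by lra.
    replace (0 / - y) with 0 by (field; lra). rewrite atan_0. field. lra.
  - subst x y. exfalso; apply Hnz; reflexivity.
  - subst x. rewrite ang_0b by lra. rewrite ang_neg by lra.
    replace (0 / - y) with 0 by (field; lra). rewrite atan_0. field. lra.
  - rewrite ang_pos by lra. rewrite ang_pos by lra.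
    assert (Hp : 0 < - (y/x)) by (replace (-(y/x)) with ((-y)/x) by (field; lra); apply Rdiv_lt_0_compat; lra).
    replace (x / - y) with (/ (- (y/x))) by (field; lra).
    rewrite atan_inv by exact Hp. rewrite atan_opp. field. lra.
  - subst y. rewrite Ropp_0, ang_0b by lra. rewrite ang_pos by lra.
    replace (0 / x) with 0 by (field; lra). rewrite atan_0. field. lra.
  - rewrite ang_neg by lra. rewrite ang_pos by lra.
    assert (Hp : 0 < y/x) by (apply Rdiv_lt_0_compat; lra).
    replace (x / - y) with (- / (y/x)) by (field; lra).
    rewrite atan_opp, atan_inv by exact Hp. field. lra.
Qed.

Definition trans pa pb (q : R*R) : bool :=
  letter_eqb (letter_of q) La && letter_eqb (letter_of (Fmap pa pb q)) Lb.

Lemma trans_iff pa pb x y :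
  trans pa pb (x,y) = true <-> 0 < x /\ fst (Fmap pa pb (x,y)) <= 0.
Proof.
  unfold trans. rewrite Fmap_eq. cbn [fst].
  destruct (Rtotal_order x 0) as [Hx|[Hx|Hx]].
  - rewrite letter_of_neg by lra. cbn [letter_eqb andb]. split; [discriminate|lra].
  - subst x. destruct (Rle_dec y 0).
    + rewrite letter_of_0a by lra. rewrite Rmult_0_r, Rminus_0_l. cbn [letter_eqb andb].
      destruct (Rtotal_order (-y) 0) as [H|[H|H]]; [lra| |].
      * rewrite H, letter_of_0a by lra. cbn [letter_eqb andb]. split; [discriminate|lra].
      * rewrite letter_of_pos by lra. cbn [letter_eqb andb]. split; [discriminate|lra].
    + rewrite letter_of_0b by lra. cbn [letter_eqb andb]. split; [discriminate|lra].
  - rewrite letter_of_pos by lra. cbn [letter_eqb andb].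
    destruct (Rtotal_order (spec pa pb La * x - y) 0) as [H|[H|H]].
    + rewrite letter_of_neg by lra. cbn [letter_eqb andb]. split; [lra|reflexivity].
    + rewrite H, letter_of_0b by lra. cbn [letter_eqb andb]. split; [lra|reflexivity].
    + rewrite letter_of_pos by lra. cbn [letter_eqb andb]. split; [discriminate|lra].
Qed.

Lemma step_ang pa pb p : p <> (0,0) ->
  ang (Fmap pa pb p) + 2 * (if trans pa pb p then 1 else 0) = hh pa pb (ang p) + 1/2.
Proof.
  destruct p as [x y]. intro Hnz.
  set (c := spec pa pb (letter_of (x,y))).
  assert (HF : Fmap pa pb (x,y) = (- (y - c * x), x)) by (rewrite Fmap_eq; f_equal; unfold c; ring).
  assert (Hq : (x, y - c * x) <> (0,0)).
  { intro E. injection E as E1 E2. apply Hnz. subst x. f_equal. lra. }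
  pose proof (ang_R x (y - c * x) Hq) as R1.
  pose proof (ang_H pa pb x y Hnz) as H1. fold c in H1.
  rewrite <- H1, <- R1, HF.
  f_equal. f_equal.
  destruct (trans pa pb (x,y)) eqn:T.
  - apply trans_iff in T. rewrite HF in T. simpl in T.
    destruct (Rlt_dec 0 x); [|lra]. destruct (Rle_dec 0 (y - c*x)); [reflexivity|lra].
  - destruct (Rlt_dec 0 x); [|reflexivity]. destruct (Rle_dec 0 (y - c*x)); [|reflexivity].
    exfalso. assert (T' : trans pa pb (x,y) = true) by (apply trans_iff; rewrite HF; simpl; lra).
    congruence.
Qed.

Definition C pa pb p t := cnt (fun s => trans pa pb (orbit pa pb s p)) t.

Lemma orbit_S pa pb t p : orbit pa pb (S t) p = Fmap pa pb (orbit pa pb t p).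
Proof. reflexivity. Qed.

Lemma orbit_add pa pb s t p : orbit pa pb (s + t) p = orbit pa pb s (orbit pa pb t p).
Proof. induction s as [|s IH]; [reflexivity|]. simpl plus. rewrite !orbit_S, IH. reflexivity. Qed.

Lemma Fmap_nz pa pb p : p <> (0,0) -> Fmap pa pb p <> (0,0).
Proof.
  destruct p as [x y]. rewrite Fmap_eq. intros H E. injection E as E1 E2. subst x.
  apply H. f_equal. lra.
Qed.

Lemma orbit_nz pa pb t p : p <> (0,0) -> orbit pa pb t p <> (0,0).
Proof. intro H. induction t as [|t IH]; [exact H|]. rewrite orbit_S. apply Fmap_nz, IH. Qed.

Lemma cnt_le g N : (cnt g N <= N)%nat.
Proof. induction N; simpl; [lia|]. destruct (g N); lia. Qed.

Lemma C_S pa pb p t : C pa pb p (S t) = (C pa pb p t + if trans pa pb (orbit pa pb t p) then 1 else 0)%nat.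
Proof. reflexivity. Qed.

Lemma Lam_step pa pb p t : p <> (0,0) ->
  2 * INR (C pa pb p (S t)) + ang (orbit pa pb (S t) p) =
  2 * INR (C pa pb p t) + hh pa pb (ang (orbit pa pb t p)) + 1/2.
Proof.
  intro Hp. rewrite C_S, plus_INR, orbit_S.
  pose proof (step_ang pa pb (orbit pa pb t p) (orbit_nz pa pb t p Hp)) as H.
  destruct (trans pa pb (orbit pa pb t p)); simpl INR in *; lra.
Qed.

Lemma mono_lift pa pb (K1 K2 : nat) s1 s2 : 0 <= s1 < 2 -> 0 <= s2 < 2 ->
  2 * INR K1 + s1 <= 2 * INR K2 + s2 -> 2 * INR K1 + hh pa pb s1 <= 2 * INR K2 + hh pa pb s2.
Proof.
  intros H1 H2 H.
  destruct (lt_eq_lt_dec K1 K2) as [[L|L]|L].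
  - apply le_INR in L. rewrite S_INR in L.
    destruct (Rlt_dec s1 1); destruct (Rlt_dec s2 1);
    destruct (hh_range pa pb s1) as [A1 B1]; destruct (hh_range pa pb s2) as [A2 B2];
    try (specialize (A1 ltac:(lra))); try (specialize (B1 ltac:(lra)));
    try (specialize (A2 ltac:(lra))); try (specialize (B2 ltac:(lra))); lra.
  - subst. apply Rplus_le_compat_l. apply hh_mono; lra.
  - apply le_INR in L. rewrite S_INR in L. lra.
Qed.

Lemma compare pa pb p q (j1 j2 : nat) : p <> (0,0) -> q <> (0,0) ->
  2 * INR j1 + ang p <= 2 * INR j2 + ang q -> forall t,
  2 * INR (C pa pb p t + j1) + ang (orbit pa pb t p) <= 2 * INR (C pa pb q t + j2) + ang (orbit pa pb t q).
Proof.
  intros Hp Hq H0 t. induction t as [|t IH]; [simpl; exact H0|].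
  rewrite !plus_INR in *.
  pose proof (Lam_step pa pb p t Hp). pose proof (Lam_step pa pb q t Hq).
  pose proof (mono_lift pa pb (C pa pb p t + j1) (C pa pb q t + j2)
    (ang (orbit pa pb t p)) (ang (orbit pa pb t q)) (ang_range _) (ang_range _)) as M.
  rewrite !plus_INR in M. specialize (M ltac:(lra)). lra.
Qed.

Definition v0 : R*R := (0, -1).

Lemma ang_v0 : ang v0 = 1.
Proof. unfold v0. apply ang_0a. lra. Qed.

Lemma count_close pa pb p t : p <> (0,0) ->
  INR (C pa pb p t) <= INR (C pa pb v0 t) + 1 /\ INR (C pa pb v0 t) <= INR (C pa pb p t) + 1.
Proof.
  intro Hp. assert (Hv : v0 <> (0,0)) by (unfold v0; intro E; injection E; lra).
  pose proof (ang_range p) as Rp. pose proof ang_v0 as Av.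
  pose proof (compare pa pb p v0 0 1 Hp Hv ltac:(simpl INR; lra) t) as H1.
  pose proof (compare pa pb v0 p 0 1 Hv Hp ltac:(simpl INR; lra) t) as H2.
  rewrite !plus_INR in H1, H2. simpl INR in H1, H2.
  pose proof (ang_range (orbit pa pb t p)). pose proof (ang_range (orbit pa pb t v0)).
  assert (Z1 : (C pa pb p t < C pa pb v0 t + 2)%nat).
  { apply INR_lt. rewrite plus_INR. simpl INR. lra. }
  assert (Z2 : (C pa pb v0 t < C pa pb p t + 2)%nat).
  { apply INR_lt. rewrite plus_INR. simpl INR. lra. }
  split.
  - assert (C pa pb p t <= C pa pb v0 t + 1)%nat as L by lia. apply le_INR in L.
    rewrite plus_INR in L. simpl INR in L. lra.
  - assert (C pa pb v0 t <= C pa pb p t + 1)%nat as L by lia. apply le_INR in L.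
    rewrite plus_INR in L. simpl INR in L. lra.
Qed.

Lemma count_ab_C pa pb p t : count_ab pa pb p (S t) = C pa pb p t.
Proof.
  unfold count_ab, C. replace (S t - 1)%nat with t by lia.
  induction t as [|t IH]; [reflexivity|].
  rewrite seq_S, filter_app, length_app, IH. simpl cnt. f_equal.
  simpl. unfold trans. destruct (_ && _); reflexivity.
Qed.

Lemma C_periodic pa pb p P : orbit pa pb P p = p -> forall t,
  C pa pb p (P + t) = (C pa pb p P + C pa pb p t)%nat.
Proof.
  intros HP t. induction t as [|t IH]; [rewrite Nat.add_0_r; change (C pa pb p 0) with 0%nat; lia|].
  rewrite Nat.add_succ_r, !C_S, IH. rewrite (Nat.add_comm P t), orbit_add, HP. lia.
Qed.

Lemma C_bound pa pb p P : (0 < P)%nat -> orbit pa pb P p = p -> forall t,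
  - (INR P * INR P) <= INR P * INR (C pa pb p t) - INR (C pa pb p P) * INR t <= INR P * INR P.
Proof.
  intros HP0 HP t. induction t as [t IH] using lt_wf_ind.
  destruct (lt_dec t P) as [L|L].
  - pose proof (cnt_le (fun s => trans pa pb (orbit pa pb s p)) t) as A.
    pose proof (cnt_le (fun s => trans pa pb (orbit pa pb s p)) P) as B.
    fold (C pa pb p t) in A. fold (C pa pb p P) in B.
    apply le_INR in A, B. apply lt_INR in L. pose proof (pos_INR (C pa pb p t)).
    pose proof (pos_INR (C pa pb p P)). pose proof (pos_INR t).
    split; nra.
  - replace t with (P + (t - P))%nat by lia.
    rewrite C_periodic by exact HP. rewrite !plus_INR.
    specialize (IH (t - P)%nat ltac:(lia)). nra.
Qed.

Lemma letter_eqb_true u v : letter_eqb u v = true <-> u = v.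
Proof. destruct u, v; simpl; split; intro; congruence. Qed.

Definition b2 (b : bool) : nat := if b then 1%nat else 0%nat.

Lemma recon (x : nat -> R) (om : nat -> letter) (tau mu : nat -> bool) P :
  (forall t, tau t = true <-> 0 < x t /\ x (S t) <= 0) ->
  (forall t, mu t = letter_eqb (om t) La && letter_eqb (om (S t)) Lb) ->
  (forall t, (t <= P)%nat -> 0 < x t -> om t = La) ->
  (forall t, (t <= P)%nat -> x t < 0 -> om t = Lb) ->
  (forall t, (1 <= t)%nat -> x t = 0 -> x (S t) = - x (t-1)%nat /\ x (t-1)%nat <> 0) ->
  x 0%nat = 0 -> 0 < x 1%nat -> x (P-1)%nat < 0 -> (2 <= P)%nat ->
  cnt tau P = cnt mu P.
Proof.
  intros Htau Hmu Hpos Hneg Hiso X0 X1 XP HP.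
  assert (Mu : forall t, mu t = true <-> om t = La /\ om (S t) = Lb).
  { intro t. rewrite Hmu, andb_true_iff, !letter_eqb_true. tauto. }
  assert (Pair : forall t, (S t <= P)%nat -> x t <> 0 -> x (S t) <> 0 -> tau t = mu t).
  { intros t Ht A B. apply eq_true_iff_eq. rewrite Htau, Mu.
    destruct (Rlt_dec 0 (x t)); destruct (Rlt_dec 0 (x (S t))).
    - rewrite (Hpos (S t)) by (lia || lra). split; [lra|intros [_ E]; discriminate].
    - rewrite (Hpos t), (Hneg (S t)) by (lia || lra). split; [auto|lra].
    - rewrite (Hneg t) by (lia || lra). split; [lra|intros [E _]; discriminate].
    - rewrite (Hneg t) by (lia || lra). split; [lra|intros [E _]; discriminate]. }
  assert (Dbl : forall t, (1 <= t)%nat -> (S t <= P)%nat -> x t = 0 ->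
            (b2 (tau (t-1)%nat) + b2 (tau t) = b2 (mu (t-1)%nat) + b2 (mu t))%nat).
  { intros t H1 H2 Z. destruct (Hiso t H1 Z) as [E N].
    assert (Tt : tau t = false) by (destruct (tau t) eqn:T; [apply Htau in T; lra|reflexivity]).
    rewrite Tt. replace (S (t-1)) with t in * by lia.
    destruct (Rlt_dec 0 (x (t-1)%nat)).
    - assert (T1 : tau (t-1)%nat = true) by (apply Htau; replace (S (t-1)) with t by lia; lra).
      assert (O1 : om (t-1)%nat = La) by (apply Hpos; [lia|lra]).
      assert (O2 : om (S t) = Lb) by (apply Hneg; [lia|lra]).
      rewrite T1, !Hmu, O1, O2. replace (S (t-1)) with t by lia.
      destruct (om t); reflexivity.
    - assert (T1 : tau (t-1)%nat = false).
      { destruct (tau (t-1)%nat) eqn:T; [|reflexivity]. apply Htau in T. lra. }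
      assert (O1 : om (t-1)%nat = Lb) by (apply Hneg; [lia|lra]).
      assert (O2 : om (S t) = La) by (apply Hpos; [lia|lra]).
      rewrite T1, !Hmu, O1, O2. replace (S (t-1)) with t by lia.
      destruct (om t); reflexivity. }
  assert (Ind : forall N, (1 <= N)%nat -> (N <= P)%nat -> x N <> 0 -> cnt tau N = cnt mu N).
  { intro N. induction N as [N IH] using lt_wf_ind. intros H1 H2 HN.
    destruct N as [|N]; [lia|].
    destruct N as [|N].
    - simpl. assert (Tt : tau 0%nat = false) by (destruct (tau 0%nat) eqn:T; [apply Htau in T; lra|reflexivity]).
      assert (Mt : mu 0%nat = false).
      { destruct (mu 0%nat) eqn:T; [|reflexivity]. apply Mu in T as [_ T].
        rewrite (Hpos 1%nat) in T by (lia || lra). discriminate. }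
      rewrite Tt, Mt. reflexivity.
    - destruct (Req_dec (x (S N)) 0) as [Z|Z].
      + destruct N as [|N]; [lra|].
        assert (Hn : x (S N) <> 0) by (destruct (Hiso (S (S N)) ltac:(lia) Z) as [_ W];
          replace (S (S N) - 1)%nat with (S N) in W by lia; exact W).
        pose proof (IH (S N) ltac:(lia) ltac:(lia) ltac:(lia) Hn) as I.
        pose proof (Dbl (S (S N)) ltac:(lia) ltac:(lia) Z) as D.
        replace (S (S N) - 1)%nat with (S N) in D by lia.
        change (cnt tau (S (S (S N)))) with (cnt tau (S N) + b2 (tau (S N)) + b2 (tau (S (S N))))%nat.
        change (cnt mu (S (S (S N)))) with (cnt mu (S N) + b2 (mu (S N)) + b2 (mu (S (S N))))%nat.
        lia.
      + pose proof (IH (S N) ltac:(lia) ltac:(lia) ltac:(lia) Z) as I.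
        change (cnt tau (S (S N))) with (cnt tau (S N) + b2 (tau (S N)))%nat.
        change (cnt mu (S (S N))) with (cnt mu (S N) + b2 (mu (S N)))%nat.
        rewrite I, (Pair (S N)) by (lia || exact Z || exact HN). reflexivity. }
  destruct P as [|P']; [lia|]. replace (S P' - 1)%nat with P' in XP by lia.
  change (cnt tau (S P')) with (cnt tau P' + b2 (tau P'))%nat.
  change (cnt mu (S P')) with (cnt mu P' + b2 (mu P'))%nat.
  rewrite (Ind P') by (lia || lra).
  assert (Tt : tau P' = false) by (destruct (tau P') eqn:T; [apply Htau in T; lra|reflexivity]).
  assert (Mt : mu P' = false).
  { destruct (mu P') eqn:T; [|reflexivity]. apply Mu in T as [T _].
    rewrite (Hneg P') in T by (lia || lra). discriminate. }
  rewrite Tt, Mt. reflexivity.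
Qed.

Lemma Fmap_stp pa pb c p : (fst p = 0 \/ letter_of p = c) -> Fmap pa pb p = stp pa pb c p.
Proof.
  destruct p as [x y]. rewrite Fmap_eq. unfold stp; simpl fst; simpl snd.
  intros [H|H]; [subst x; f_equal; ring|rewrite H; reflexivity].
Qed.

Lemma orbit_run pa pb w s :
  (forall t, (t < length w)%nat -> on_boundary (orbit pa pb t s) \/ letter_of (orbit pa pb t s) = nth t w La) ->
  forall t, (t <= length w)%nat -> orbit pa pb t s = run pa pb (firstn t w) s.
Proof.
  intros HL t. induction t as [|t IH]; intro Ht; [reflexivity|].
  rewrite orbit_S, firstn_S_nth by lia. rewrite run_app, <- IH by lia.
  apply Fmap_stp. apply HL. lia.
Qed.

Lemma trans_iff' pa pb q : trans pa pb q = true <-> 0 < fst q /\ fst (Fmap pa pb q) <= 0.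
Proof. destruct q; apply trans_iff. Qed.

Lemma iso_lemma pa pb p t : p <> (0,0) -> (1 <= t)%nat -> fst (orbit pa pb t p) = 0 ->
  fst (orbit pa pb (S t) p) = - fst (orbit pa pb (t-1) p) /\ fst (orbit pa pb (t-1) p) <> 0.
Proof.
  intros Hp Ht Z. destruct t as [|t']; [lia|]. replace (S t' - 1)%nat with t' by lia.
  pose proof (orbit_nz pa pb (S t') p Hp) as NZ.
  change (orbit pa pb (S (S t')) p) with (Fmap pa pb (Fmap pa pb (orbit pa pb t' p))).
  change (orbit pa pb (S t') p) with (Fmap pa pb (orbit pa pb t' p)) in *.
  destruct (orbit pa pb t' p) as [a b]. rewrite Fmap_eq in *. simpl fst in *.
  rewrite Z. split; [ring|].
  intro E. subst a. apply NZ. rewrite Rmult_0_r in *. f_equal. lra.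
Qed.

Lemma periodic_data pa pb k j n m :
  legal_arc (w_left (S k) (S j) n) pa pb -> legal_arc (w_right (S k) (S j) m) pa pb ->
  orbit pa pb (length (w_left (S k) (S j) n ++ w_right (S k) (S j) m)) v0 = v0 /\
  C pa pb v0 (length (w_left (S k) (S j) n ++ w_right (S k) (S j) m)) = (n + m + 1)%nat.
Proof.
  intros [HC1 HL1] [HC2 HL2].
  set (wl := w_left (S k) (S j) n) in *. set (wr := w_right (S k) (S j) m) in *.
  pose proof (shape La Lb k (S j) n) as E1.
  pose proof (shape_pal La Lb k (S j) n) as Q1. cbv zeta in Q1.
  set (U1 := wpow (repeat La (S k) ++ repeat Lb (S j) ++ La :: nil) n ++ repeat La k) in *.
  assert (E1' : wl = La :: U1) by exact E1.
  pose proof (shape Lb La j (S k) m) as E2.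
  pose proof (shape_pal Lb La j (S k) m) as Q2. cbv zeta in Q2.
  set (U2 := wpow (repeat Lb (S j) ++ repeat La (S k) ++ Lb :: nil) m ++ repeat Lb j) in *.
  assert (E2' : wr = Lb :: U2) by exact E2.
  assert (R1 : run pa pb wl p0 = (0,1)) by (rewrite E1' in HC1 |- *; apply pal_middle; assumption).
  assert (R2 : run pa pb wr p0 = (0,1)) by (rewrite E2' in HC2 |- *; apply pal_middle; assumption).
  assert (R2' : run pa pb wr (0,1) = (0,-1)).
  { replace (0,1) with (opp2 p0) at 1 by (unfold opp2, p0; simpl; f_equal; ring).
    rewrite run_opp, R2. unfold opp2; simpl; f_equal; ring. }
  assert (S1 : start_pt wl = v0) by (rewrite E1'; reflexivity).
  assert (S2 : start_pt wr = (0,1)) by (rewrite E2'; reflexivity).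
  rewrite S1 in HL1. rewrite S2 in HL2.
  assert (O1 : orbit pa pb (length wl) v0 = (0,1)).
  { rewrite (orbit_run pa pb wl v0 HL1) by lia. rewrite firstn_all. exact R1. }
  assert (O2 : orbit pa pb (length wr) (0,1) = (0,-1)).
  { rewrite (orbit_run pa pb wr (0,1) HL2) by lia. rewrite firstn_all. exact R2'. }
  set (W := wl ++ wr).
  set (P := length W).
  assert (HPl : P = (length wr + length wl)%nat) by (unfold P, W; rewrite length_app; lia).
  assert (OP : orbit pa pb P v0 = v0) by (rewrite HPl, orbit_add, O1, O2; reflexivity).
  split; [exact OP|].
  assert (L2 : (2 <= P)%nat) by (rewrite HPl, E1', E2'; simpl; lia).
  assert (Hv : v0 <> (0,0)) by (unfold v0; intro E; injection E; lra).
  assert (Comp : forall t, (t < P)%nat ->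
            fst (orbit pa pb t v0) = 0 \/ letter_of (orbit pa pb t v0) = nth t W La).
  { intros t Ht. destruct (lt_dec t (length wl)) as [L|L].
    - destruct (HL1 t L) as [B|B]; [left; exact B|right]. unfold W. rewrite app_nth1 by lia. exact B.
    - replace t with ((t - length wl) + length wl)%nat by lia.
      rewrite orbit_add, O1.
      destruct (HL2 (t - length wl)%nat ltac:(lia)) as [B|B]; [left; exact B|right].
      unfold W. rewrite app_nth2 by lia. replace (t - length wl + length wl - length wl)%nat
        with (t - length wl)%nat by lia. exact B. }
  assert (Rc : cnt (fun t => trans pa pb (orbit pa pb t v0)) P = cnt (mu W) P).
  { apply (recon (fun t => fst (orbit pa pb t v0)) (fun t => nth t W La)); cbv beta.
    - intro t. rewrite trans_iff', orbit_S. tauto.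
    - intro t. reflexivity.
    - intros t Ht X. destruct (Nat.eq_dec t P) as [->|Hne].
      + rewrite OP in X. unfold v0 in X; simpl in X; lra.
      + destruct (Comp t ltac:(lia)) as [B|B]; [lra|]. rewrite <- B.
        destruct (orbit pa pb t v0) as [a b]. simpl in X. apply letter_of_pos; exact X.
    - intros t Ht X. destruct (Nat.eq_dec t P) as [->|Hne].
      + rewrite OP in X. unfold v0 in X; simpl in X; lra.
      + destruct (Comp t ltac:(lia)) as [B|B]; [lra|]. rewrite <- B.
        destruct (orbit pa pb t v0) as [a b]. simpl in X. apply letter_of_neg; exact X.
    - intros t H1 Z. apply iso_lemma; assumption.
    - reflexivity.
    - simpl. rewrite Rmult_0_r. lra.
    - assert (Y : snd (orbit pa pb (S (P-1)%nat) v0) = fst (orbit pa pb (P-1)%nat v0)).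
      { rewrite orbit_S. destruct (orbit pa pb (P-1)%nat v0); reflexivity. }
      replace (S (P-1)%nat) with P in Y by (clear -L2; clearbody P; lia). rewrite OP in Y. change (snd v0) with (-1) in Y. lra.
    - exact L2. }
  unfold C. rewrite Rc.
  pose proof (abc_cnt Lb W) as A. simpl letter_eqb in A. cbn [andb] in A.
  unfold P. unfold W, wl, wr in A |- *. rewrite abc_total in A. lia.
Qed.

Lemma limit_part pa pb P c p : (0 < P)%nat -> orbit pa pb P v0 = v0 -> C pa pb v0 P = c ->
  p <> (0,0) -> Un_cv (fun N => INR (count_ab pa pb p N) / INR N) (INR c / INR P).
Proof.
  intros HP OP Hc Hp eps Heps.
  destruct (INR_archimed eps (INR P + 2) Heps) as [N0 HN0].
  exists (S N0). intros N HN. destruct N as [|t]; [lia|].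
  rewrite count_ab_C. unfold R_dist.
  pose proof (C_bound pa pb v0 P HP OP t) as Cb. rewrite Hc in Cb.
  pose proof (count_close pa pb p t Hp) as [cc1 cc2].
  pose proof (cnt_le (fun s => trans pa pb (orbit pa pb s v0)) P) as cP.
  fold (C pa pb v0 P) in cP. rewrite Hc in cP. apply le_INR in cP.
  assert (HtN : (N0 <= t)%nat) by lia. apply le_INR in HtN.
  rewrite S_INR.
  set (Pr := INR P) in *. set (Nr := INR t + 1).
  assert (Pp : 0 < Pr) by (unfold Pr; apply lt_0_INR; exact HP).
  assert (Np : 0 < Nr) by (unfold Nr; pose proof (pos_INR t); lra).
  pose proof (pos_INR N0).
  assert (Big : Pr + 2 < eps * Nr) by (unfold Nr; nra).
  set (Cp := INR (C pa pb p t)) in *. set (Cv := INR (C pa pb v0 t)) in *.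
  set (cr := INR c) in *.
  set (u := Cp / Nr - cr / Pr).
  set (D := Pr * Cp - cr * Nr).
  assert (Hd : u * (Pr * Nr) = D) by (unfold u, D; field; lra).
  assert (Db : - (Pr * Pr + 2 * Pr) <= D <= Pr * Pr + 2 * Pr).
  { assert (0 <= cr) by (unfold cr; apply pos_INR).
    assert (A1 : Pr * Cp <= Pr * Cv + Pr) by nra.
    assert (A2 : Pr * Cv <= Pr * Cp + Pr) by nra.
    unfold D, Nr. split; nra. }
  assert (PN : 0 < Pr * Nr) by nra.
  apply Rabs_def1.
  - apply (Rmult_lt_reg_r (Pr * Nr)); [exact PN|]. rewrite Hd. nra.
  - apply (Rmult_lt_reg_r (Pr * Nr)); [exact PN|]. rewrite Ropp_mult_distr_l_reverse, Hd. nra.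
Qed.

Theorem mainTheorem17 (kappa l n m : nat) :
  (2 <= kappa)%nat -> (2 <= l)%nat ->
  forall pa pb : R,
    Dbox kappa l pa pb ->
    legal_arc (w_left kappa l n) pa pb ->
    legal_arc (w_right kappa l m) pa pb ->
    rotation_number_is pa pb (vartheta_minus (kappa + l + 1) (n + m + 1)).
Proof.
  intros Hk Hl pa pb _ L1 L2.
  destruct kappa as [|k]; [lia|]. destruct l as [|j]; [lia|].
  destruct (periodic_data pa pb k j n m L1 L2) as [OP Hc].
  set (P := length (w_left (S k) (S j) n ++ w_right (S k) (S j) m)) in *.
  assert (HPv : (P + 1 = (n + m + 1) * (S k + S j + 1))%nat).
  { unfold P. rewrite length_app. unfold w_left, w_right.
    rewrite !length_app, !length_wpow, !length_app, !repeat_length. nia. }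
  assert (HP : (0 < P)%nat) by nia.
  intros p Hp.
  replace (vartheta_minus (S k + S j + 1) (n + m + 1)) with (INR (n + m + 1) / INR P).
  - apply limit_part; assumption.
  - unfold vartheta_minus. f_equal.
    apply (f_equal INR) in HPv. rewrite plus_INR, mult_INR in HPv. simpl (INR 1) in HPv. lra.
Qed.
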